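(* Let $h,n\geq2$ and let $U,V\leq G$ be such that $\langle U,V\rangle$ is regular. (i) If $p^U\subseteq p^V$ for every $p\in\mathcal{P}$, then $\mathcal{F}^V\subseteq\mathcal{F}^U$. (ii) If $p^U=p^V$ for every $p\in\mathcal{P}$, then $\mathcal{F}^V=\mathcal{F}^U$.
   Context: Permutations compose as $(\sigma\tau)(x)=\sigma(\tau(x))$. Let $G=S_h\times S_n$ and $\mathcal{P}=(S_n)^h$ (preference profiles), with $G$ acting by $(p^{(\varphi,\psi)})_i=\psi\,p_{\varphi^{-1}(i)}$; for $U\leq G$, $p^U=\{p^g:g\in U\}$. $U\leq G$ is regular if for every $p\in\mathcal{P}$, $\{g\in U:p^g=p\}\subseteq S_h\times\{id\}$. A social preference function is any $F:\mathcal{P}\to S_n$; $\mathcal{F}^U$ denotes the set of $U$-symmetric ones, i.e. those with $F(p^{(\varphi,\psi)})=\psi F(p)$ for all $p\in\mathcal{P}$, $(\varphi,\psi)\in U$. *)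

(* Defs.v *)
From HB Require Import structures.
From mathcomp Require Import all_boot all_fingroup.
Set Implicit Arguments. Unset Strict Implicit. Unset Printing Implicit Defensive.
Local Open Scope group_scope.

Definition Gtype (h n : nat) := ({perm 'I_h} * {perm 'I_n})%type.

Definition profile (h n : nat) := {ffun 'I_h -> {perm 'I_n}}.

(* Composition in the paper: (sigma tau)(x) = sigma (tau x).
   MathComp's perm product is (s * t) x = t (s x), so the paper's
   sigma tau is the MathComp product tau * sigma. *)
Definition pcomp (n : nat) (s t : {perm 'I_n}) : {perm 'I_n} := t * s.

Definition pact (h n : nat) (p : profile h n) (g : Gtype h n) : profile h n :=
  [ffun i => pcomp g.2 (p (g.1^-1 i))].

Definition orbitU (h n : nat) (p : profile h n) (U : {set Gtype h n})
  : {set profile h n} := [set pact p g | g in U].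

Definition regular (h n : nat) (U : {set Gtype h n}) : Prop :=
  forall p : profile h n, forall g, g \in U -> pact p g = p -> g.2 = 1.

Definition Usymmetric (h n : nat) (U : {set Gtype h n})
  (F : profile h n -> {perm 'I_n}) : Prop :=
  forall p : profile h n, forall g, g \in U -> F (pact p g) = pcomp g.2 (F p).

(* Main.v *)
Require Import Defs.
From HB Require Import structures.
From mathcomp Require Import all_boot all_fingroup.
Local Open Scope group_scope.

Lemma pactM (h n : nat) (p : profile h n) (g g' : Gtype h n) :
  pact (pact p g) g' = pact p (g * g').
Proof.
apply/ffunP => i; rewrite /pact !ffunE /pcomp /=.
apply/permP => x; rewrite !permM invMg permM //.
Qed.

Lemma pact1 (h n : nat) (p : profile h n) : pact p 1 = p.
Proof.
apply/ffunP => i; rewrite /pact !ffunE /pcomp /= invg1 perm1; apply/permP => x; rewrite permM perm1 //.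
Qed.

Lemma part1 (h n : nat) (U V : {group Gtype h n}) (hreg : regular (<< U :|: V >>)) :
  (forall p : profile h n, orbitU p U \subset orbitU p V) ->
     forall F : profile h n -> {perm 'I_n}, Usymmetric V F -> Usymmetric U F.
Proof.
move=> sub F FV p u uU.
have : pact p u \in orbitU p V.
  by apply: (subsetP (sub p)); apply/imsetP; exists u.
case/imsetP => v vV e.
have huv : (u * v^-1).2 = 1.
  apply: (hreg p).
    apply: groupM; last rewrite groupV; apply: (subsetP (subset_gen _));
      by rewrite inE ?uU ?vV ?orbT.
  by rewrite -pactM e pactM mulgV pact1.
rewrite e FV //.
have -> : u.2 = v.2.
  move: huv => /= /eqP; rewrite mulg_eq1 invgK => /eqP -> //.
done.
Qed.

Theorem mainTheorem14 (h n : nat) (hh : 2 <= h) (hn : 2 <= n)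
  (U V : {group Gtype h n}) (hreg : regular (<< U :|: V >>)) :
  ((forall p : profile h n, orbitU p U \subset orbitU p V) ->
     forall F : profile h n -> {perm 'I_n}, Usymmetric V F -> Usymmetric U F) /\
  ((forall p : profile h n, orbitU p U = orbitU p V) ->
     forall F : profile h n -> {perm 'I_n}, Usymmetric V F <-> Usymmetric U F).
Proof.
split; first exact: part1.
move=> eq F; split; apply: part1.
- exact: hreg.
- by move=> p; rewrite eq.
- by rewrite setUC.
- by move=> p; rewrite eq.
Qed.
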